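(* Let $h,k\ge0$ be integers. For every digraph $G$ there is a partition of $V(G)$ into three sets $P,Q,R$ (possibly empty) such that $G[P]$ is $(h,k)$-out-orderable, $G[Q]$ is $(h,k)$-in-orderable, and $G[R]$ is $(h,k)$-robust.
   Context: Digraphs are finite, with no loops, parallel edges or antiparallel pairs; $\chi(X)$ denotes the chromatic number of the underlying undirected graph of $G[X]$. A digraph $G$ is $(h,k)$-out-orderable if there is a partition $X_1,\dots,X_n$ of $V(G)$ such that for each $i$, $\chi(X_i)\le h$ and each vertex of $X_i$ has at most $k-1$ out-neighbours in $X_{i+1}\cup\dots\cup X_n$; $(h,k)$-in-orderable is defined identically with in-neighbours in place of out-neighbours. A digraph $G$ is $(h,k)$-robust if for every nonempty $Z\subseteq V(G)$ with $\chi(Z)\le h$, some vertex of $Z$ has at least $k$ out-neighbours in $V(G)\setminus Z$ and at least $k$ in-neighbours in $V(G)\setminus Z$. *)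

(* Defs.v *)
From mathcomp Require Import all_boot.
Set Implicit Arguments. Unset Strict Implicit. Unset Printing Implicit Defensive.

(* A digraph is a finite vertex type T with an arc relation E : rel T
   (E x y = there is an arc x -> y).  Being a relation, there are no
   parallel arcs; loops and antiparallel pairs are excluded by hypotheses
   in the theorem. *)

Definition chi_le (T : finType) (E : rel T) (X : {set T}) (h : nat) : Prop :=
  exists c : T -> nat,
    (forall x, x \in X -> c x < h) /\
    (forall x y, x \in X -> y \in X -> (E x y || E y x) -> c x != c y).

(* G[S] is (h,k)-out-orderable: there is a partition X_0,...,X_{n-1} of S
   into nonempty parts with chi(X_i) <= h and every vertex of X_i having at
   most k-1 out-neighbours in X_{i+1} u ... u X_{n-1}
   (written  #|...| + 1 <= k  so that k = 0 is handled literally). *)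
Definition out_orderable (T : finType) (E : rel T) (h k : nat) (S : {set T})
  : Prop :=
  exists (n : nat) (X : 'I_n -> {set T}),
    [/\ (forall i, X i != set0),
        (forall i j, i != j -> [disjoint X i & X j]),
        \bigcup_(i < n) X i = S,
        (forall i, chi_le E (X i) h) &
        (forall i v, v \in X i ->
           #|[set w | E v w & w \in \bigcup_(j < n | i < j) X j]| + 1 <= k)].

Definition in_orderable (T : finType) (E : rel T) (h k : nat) (S : {set T})
  : Prop :=
  exists (n : nat) (X : 'I_n -> {set T}),
    [/\ (forall i, X i != set0),
        (forall i j, i != j -> [disjoint X i & X j]),
        \bigcup_(i < n) X i = S,
        (forall i, chi_le E (X i) h) &
        (forall i v, v \in X i ->
           #|[set w | E w v & w \in \bigcup_(j < n | i < j) X j]| + 1 <= k)].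

Definition robust (T : finType) (E : rel T) (h k : nat) (S : {set T}) : Prop :=
  forall Z : {set T}, Z \subset S -> Z != set0 -> chi_le E Z h ->
    exists2 v, v \in Z &
      k <= #|[set w | E v w & w \in S :\: Z]| /\
      k <= #|[set w | E w v & w \in S :\: Z]|.

(* Main.v *)
Require Import Defs.
From mathcomp Require Import all_boot.
From Stdlib Require Import Classical.
Set Implicit Arguments. Unset Strict Implicit.

Definition ordb (T : finType) (E F : rel T) (h k : nat) (S : {set T}) : Prop :=
  exists (n : nat) (X : 'I_n -> {set T}),
    [/\ (forall i, X i != set0),
        (forall i j, i != j -> [disjoint X i & X j]),
        \bigcup_(i < n) X i = S,
        (forall i, chi_le E (X i) h) &
        (forall i v, v \in X i ->
           #|[set w | F v w & w \in \bigcup_(j < n | i < j) X j]| + 1 <= k)].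

Lemma disP (T : finType) (A B : {set T}) :
  [disjoint A & B] <-> (forall x, x \in A -> x \in B -> False).
Proof.
split.
  by move=> H x xA xB; rewrite (disjointFr H xA) in xB.
move=> H; rewrite disjoint_subset; apply/subsetP => x xA.
rewrite !inE; apply/negP => xB; exact: H xA xB.
Qed.

Lemma ordb0 (T : finType) (E F : rel T) (h k : nat) : ordb E F h k set0.
Proof.
exists 0, (fun _ => set0); split => //; try by case.
by rewrite big_ord0.
Qed.

Lemma chi_sub (T : finType) (E : rel T) (A Z : {set T}) h :
  A \subset Z -> chi_le E Z h -> chi_le E A h.
Proof.
move=> /subsetP sAZ [c [c1 c2]]; exists c; split.
  by move=> x xA; apply: c1; apply: sAZ.
by move=> x y xA yA; apply: c2; apply: sAZ.
Qed.

Lemma ordb_cons (T : finType) (E F : rel T) h k (A S : {set T}) :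
  ordb E F h k S -> [disjoint A & S] -> chi_le E A h ->
  (forall v, v \in A -> #|[set w | F v w & w \in S]| + 1 <= k) ->
  ordb E F h k (A :|: S).
Proof.
move=> [n [X [Xne Xdis XU Xchi Xk]]] dAS chiA kA.
have [->|A0] := eqVneq A set0.
  by rewrite set0U; exists n, X.
pose X' := fun i : 'I_n.+1 => match unlift ord0 i with None => A | Some j => X j end.
have X'0 : X' ord0 = A by rewrite /X' unlift_none.
have X'l : forall j, X' (lift ord0 j) = X j by move=> j; rewrite /X' liftK.
have XS : forall j x, x \in X j -> x \in S.
  by move=> j x xj; rewrite -XU; apply/bigcupP; exists j.
exists n.+1, X'; split.
- move=> i; case: (unliftP ord0 i) => [j ->|->]; by rewrite ?X'l ?X'0.
- move=> i j; case: (unliftP ord0 i) => [i' ->|->]; case: (unliftP ord0 j) => [j' ->|->];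
    rewrite ?X'l ?X'0 ?eqxx //.
  + move=> ne; apply: Xdis; apply: contra ne => /eqP ->; by [].
  + move=> _; apply/disP => x xi xA; move/disP: dAS; apply; [exact xA| exact: XS xi].
  + move=> _; apply/disP => x xA xj; move/disP: dAS; apply; [exact xA| exact: XS xj].
- by rewrite big_ord_recl X'0; congr (_ :|: _); rewrite -XU; apply: eq_bigr => j _; rewrite X'l.
- move=> i; case: (unliftP ord0 i) => [j ->|->]; by rewrite ?X'l ?X'0.
- move=> i v; case: (unliftP ord0 i) => [i' ->|->]; rewrite ?X'l ?X'0 => vi.
  + apply: leq_trans (Xk i' v vi); rewrite leq_add2r; apply: subset_leq_card.
    apply/subsetP => w; rewrite !inE => /andP [Fvw /bigcupP [j ij wj]].
    rewrite Fvw /=; apply/bigcupP.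
    case: (unliftP ord0 j) wj ij => [j' ->|->]; rewrite ?X'l ?X'0.
      by move=> wj ij; exists j' => //; move: ij; rewrite !lift0.
    by move=> _; rewrite ltn0.
  + apply: leq_trans (kA v vi); rewrite leq_add2r; apply: subset_leq_card.
    apply/subsetP => w; rewrite !inE => /andP [Fvw /bigcupP [j ij wj]].
    rewrite Fvw /=.
    case: (unliftP ord0 j) wj ij => [j' ->|->]; rewrite ?X'l ?X'0.
      by move=> wj _; exact: XS wj.
    by rewrite ltnn.
Qed.

Lemma main_ind (h k : nat) (T : finType) (E : rel T) (S : {set T}) :
  exists P Q R : {set T},
    ((forall x, x \in P -> x \in Q -> False) /\
        (forall x, x \in P -> x \in R -> False) /\
        (forall x, x \in Q -> x \in R -> False) /\
        P :|: Q :|: R = S /\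
        ordb E E h k P /\ ordb E (fun v w => E w v) h k Q /\
        robust E h k R).
Proof.
move: {2}#|S| (leqnn #|S|) => m; elim: m S => [|m IH] S.
  rewrite leqn0 cards_eq0 => /eqP ->.
  exists set0, set0, set0; split; [|split; [|split; [|split; [|split; [|split]]]]];
    rewrite ?setU0 //; try exact: ordb0; try by move=> x; rewrite inE.
  by move=> Z; rewrite subset0 => /eqP ->; rewrite eqxx.
move=> Sm.
have [Hr|Hnr] := classic (robust E h k S).
  exists set0, set0, S; split; [|split; [|split; [|split; [|split; [|split]]]]];
    rewrite ?set0U //; try exact: ordb0; try by move=> x; rewrite inE.
pose outc Z v := #|[set w | E v w & w \in S :\: Z]|.
pose inc Z v := #|[set w | E w v & w \in S :\: Z]|.
have [Z [ZS Z0 Zc Zv]] : exists Z : {set T}, [/\ Z \subset S, Z != set0, chi_le E Z h &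
    forall v, v \in Z -> ~ (k <= outc Z v /\ k <= inc Z v)].
  apply: NNPP => Hne; apply: Hnr => Z HZS HZ0 HZc; apply: NNPP => Hno; apply: Hne.
  exists Z; split => // v vZ Hv; apply: Hno; exists v => //.
have lt : #|S :\: Z| <= m.
  rewrite -ltnS; apply: leq_trans Sm; rewrite cardsDS //.
  rewrite ltn_subrL; apply/andP; split; first by rewrite card_gt0.
  by apply: leq_trans (subset_leq_card ZS); rewrite card_gt0.
have [P' [Q' [R' [dPQ [dPR [dQR [U [Pord [Qord Rrob]]]]]]]]] := IH _ lt.
have inS' : forall x, x \in P' :|: Q' :|: R' -> x \in S :\: Z by move=> x; rewrite U.
have PS : forall x, x \in P' -> x \in S :\: Z by move=> x xP; apply: inS'; rewrite !inE xP.
have QS : forall x, x \in Q' -> x \in S :\: Z by move=> x xP; apply: inS'; rewrite !inE xP orbT.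
have RS : forall x, x \in R' -> x \in S :\: Z by move=> x xP; apply: inS'; rewrite !inE xP orbT.
pose Z1 := [set v in Z | outc Z v < k].
pose Z2 := Z :\: Z1.
have Z1Z : Z1 \subset Z by apply/subsetP => x; rewrite inE => /andP [].
have Z2Z : Z2 \subset Z by apply: subsetDl.
have ZnS : forall x, x \in Z -> x \in S :\: Z -> False by move=> x xZ; rewrite !inE xZ.
exists (Z1 :|: P'), (Z2 :|: Q'), R'; split; [|split; [|split; [|split; [|split; [|split]]]]].
- move=> x; rewrite !inE => /orP [/andP [xZ xk]|xP] /orP [/andP [xZ1 xZ2]|xQ].
  + by move: xZ1; rewrite xZ xk.
  + exact: ZnS xZ (QS _ xQ).
  + by apply: ZnS xZ2 (PS _ xP).
  + exact: dPQ xP xQ.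
- move=> x; rewrite !inE => /orP [/andP [xZ _]|xP] xR.
  + exact: ZnS xZ (RS _ xR).
  + exact: dPR xP xR.
- move=> x; rewrite !inE => /orP [/andP [_ xZ]|xQ] xR.
  + exact: ZnS xZ (RS _ xR).
  + exact: dQR xQ xR.
- apply/setP => x; have Ux := congr1 (fun A : {set T} => x \in A) U; move: Ux; rewrite /= !inE.
  have [xZ|xZ] := boolP (x \in Z); last first.
    by rewrite !andbF /= => ->.
  move=> _.
  have -> : x \in S by move/subsetP: ZS; apply.
  have xnP : x \in P' = false by apply/negP => xP; exact: ZnS xZ (PS _ xP).
  have xnQ : x \in Q' = false by apply/negP => xP; exact: ZnS xZ (QS _ xP).
  have xnR : x \in R' = false by apply/negP => xP; exact: ZnS xZ (RS _ xP).
  by rewrite xnP xnQ xnR; case: (outc Z x < k).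
- apply: ordb_cons => //.
  + by apply/disP => x; rewrite !inE => /andP [xZ _] xP; exact: ZnS xZ (PS _ xP).
  + exact: chi_sub Z1Z Zc.
  + move=> v; rewrite inE => /andP [vZ vk]; apply: leq_trans vk.
    rewrite addn1 ltnS; apply: subset_leq_card; apply/subsetP => w.
    by rewrite !inE => /andP [-> /PS]; rewrite !inE.
- apply: ordb_cons => //.
  + by apply/disP => x; rewrite !inE => /andP [_ xZ] xP; exact: ZnS xZ (QS _ xP).
  + exact: chi_sub Z2Z Zc.
  + move=> v; rewrite !inE => /andP [vn vZ].
    move: vn; rewrite vZ /= -leqNgt => kout.
    have kin : inc Z v < k by rewrite ltnNge; apply/negP => kin; apply: (Zv v vZ).
    apply: leq_trans kin.
    rewrite addn1 ltnS; apply: subset_leq_card; apply/subsetP => w.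
    by rewrite !inE => /andP [-> /QS]; rewrite !inE.
- exact: Rrob.
Qed.

Theorem theorem3p5 (h k : nat) (T : finType) (E : rel T) :
  irreflexive E ->
  (forall x y, E x y -> ~~ E y x) ->
  exists P Q R : {set T},
    [/\ [&& [disjoint P & Q], [disjoint P & R] & [disjoint Q & R]],
        P :|: Q :|: R = [set: T],
        out_orderable E h k P,
        in_orderable E h k Q &
        robust E h k R].
Proof.
move=> _ _.
have [P [Q [R [dPQ [dPR [dQR [U [Po [Qo Rr]]]]]]]]] := main_ind h k E [set: T].
exists P, Q, R; split => //.
by apply/and3P; split; apply/disP.
Qed.
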